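(* For every $0<\alpha<1$, $$1-2\cdot 2^{1-\alpha}+3^{1-\alpha}-\zeta(\alpha-1)>0,$$ where $\zeta$ is the Riemann zeta function.
   Context: In the paper this quantity is denoted $\delta_2^{(\alpha)}=\sigma_2^{(\alpha)}-\zeta(\alpha-1)$ with $\sigma_2^{(\alpha)}=1-2\cdot 2^{1-\alpha}+3^{1-\alpha}$. $\zeta$ is the analytically continued Riemann zeta function. *)

(* Defs.v *)
From Stdlib Require Import Reals.
From Coquelicot Require Import Coquelicot.
Open Scope R_scope.

(* Riemann zeta function on real arguments s > -1, s <> 1, as the limit
     zeta(s) = lim_{M->oo} ( sum_{n=1}^M n^{-s} - M^{1-s}/(1-s) - M^{-s}/2 ),
   which is the (first-order Euler–Maclaurin) formula for the analytic
   continuation of zeta to Re s > -1, s <> 1.  Here M = N+1. *)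
Definition zeta_partial (s : R) (N : nat) : R :=
  sum_f_R0 (fun k => Rpower (INR (S k)) (- s)) N
  - Rpower (INR (S N)) (1 - s) / (1 - s)
  - Rpower (INR (S N)) (- s) / 2.

Definition zeta (s : R) : R := real (Lim_seq (zeta_partial s)).

(* Main.v *)
Require Import Defs.
From Stdlib Require Import Reals.
From Coquelicot Require Import Coquelicot.
From Stdlib Require Import Lra Psatz.
Open Scope R_scope.

Lemma mono (phi dphi : R -> R) (a b : R) : a <= b ->
  (forall t, a <= t <= b -> is_derive phi t (dphi t)) ->
  (forall t, a <= t <= b -> 0 <= dphi t) -> phi a <= phi b.
Proof.
  intros Hab Hd Hp. destruct (Req_dec a b) as [->|Hne]; [lra|].
  destruct (MVT_cor2 phi dphi a b) as [c [Hc1 Hc2]]; [lra| |].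
  - intros c Hc; apply is_derive_Reals; auto.
  - assert (0 <= dphi c) by (apply Hp; lra). nra.
Qed.

Lemma mono' (phi dphi : R -> R) (a b : R) : a <= b ->
  (forall t, a <= t <= b -> is_derive phi t (dphi t)) ->
  (forall t, a <= t <= b -> dphi t <= 0) -> phi b <= phi a.
Proof.
  intros Hab Hd Hp.
  assert (- phi a <= - phi b); [|lra].
  apply (mono (fun t => - phi t) (fun t => - dphi t)); auto.
  - intros t Ht. apply (is_derive_opp phi). auto.
  - intros t Ht. specialize (Hp t Ht). lra.
Qed.

Lemma Dq (b x : R) : 0 < x -> is_derive (fun y => Rpower y b) x (b * Rpower x b / x).
Proof.
  intros Hx. apply is_derive_Reals.
  replace (b * Rpower x b / x) with (b * Rpower x (b - 1)).
  - apply derivable_pt_lim_power; auto.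
  - unfold Rminus. rewrite Rpower_plus, Rpower_Ropp, Rpower_1 by auto. field. lra.
Qed.

Lemma Dq_ex (b x : R) : 0 < x -> ex_derive (fun y => Rpower y b) x.
Proof. intros. eexists. apply Dq; auto. Qed.

Lemma Dq_D (b x : R) : 0 < x -> Derive (fun y => Rpower y b) x = b * Rpower x b / x.
Proof. intros. apply is_derive_unique, Dq; auto. Qed.

Definition G b k a t := Rpower (a+t) b*(a+t)/(1+b) - Rpower a b * a/(1+b)
  - t*(Rpower a b + Rpower (a+t) b)/2 + k*t^2*(b*Rpower (a+t) b/(a+t) - b*Rpower a b/a).
Definition G1 b k a t := Rpower (a+t) b - (Rpower a b + Rpower (a+t) b)/2
  - t*b*Rpower (a+t) b/(2*(a+t)) + 2*k*t*(b*Rpower (a+t) b/(a+t) - b*Rpower a b/a)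
  + k*t^2*b*(b-1)*Rpower (a+t) b/(a+t)^2.
Definition G2 b k a t := - t*b*(b-1)*Rpower (a+t) b/(2*(a+t)^2)
  + 2*k*(b*Rpower (a+t) b/(a+t) - b*Rpower a b/a)
  + 4*k*t*b*(b-1)*Rpower (a+t) b/(a+t)^2 + k*t^2*b*(b-1)*(b-2)*Rpower (a+t) b/(a+t)^3.
Definition G3 b k a t := (6*k-1/2)*(b*(b-1)*Rpower (a+t) b/(a+t)^2
  + t*b*(b-1)*(b-2)*Rpower (a+t) b/(a+t)^3)
  + k*t^2*b*(b-1)*(b-2)*(b-3)*Rpower (a+t) b/(a+t)^4.

Lemma dG b k a t : 0 < a -> 0 < a + t -> 1 + b <> 0 -> is_derive (G b k a) t (G1 b k a t).
Proof.
  intros Ha Hx Hb. unfold G, G1. auto_derive.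
  - repeat split; try apply Dq_ex; auto; try (apply Rgt_not_eq || apply Rlt_not_eq'); try nra; try (repeat apply Rmult_lt_0_compat; lra).
  - rewrite Dq_D by auto. field. lra.
Qed.
Lemma dG1 b k a t : 0 < a -> 0 < a + t -> is_derive (G1 b k a) t (G2 b k a t).
Proof.
  intros Ha Hx. unfold G1, G2. auto_derive.
  - repeat split; try apply Dq_ex; auto; try (apply Rgt_not_eq || apply Rlt_not_eq'); try nra; try (repeat apply Rmult_lt_0_compat; lra).
  - rewrite Dq_D by auto. field. lra.
Qed.
Lemma dG2 b k a t : 0 < a -> 0 < a + t -> is_derive (G2 b k a) t (G3 b k a t).
Proof.
  intros Ha Hx. unfold G2, G3. auto_derive.
  - repeat split; try apply Dq_ex; auto; try (apply Rgt_not_eq || apply Rlt_not_eq'); try nra; try (repeat apply Rmult_lt_0_compat; lra).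
  - rewrite Dq_D by auto. field. lra.
Qed.

Lemma G2_0 b k a : 0 < a -> G2 b k a 0 = 0.
Proof. intros. unfold G2. rewrite Rplus_0_r. field. lra. Qed.
Lemma G1_0 b k a : 0 < a -> G1 b k a 0 = 0.
Proof. intros. unfold G1. rewrite Rplus_0_r. field. lra. Qed.
Lemma G_0 b k a : 0 < a -> 1 + b <> 0 -> G b k a 0 = 0.
Proof. intros. unfold G. rewrite Rplus_0_r. field. lra. Qed.

Lemma Gpos b k a : 0 < a -> 1 + b <> 0 ->
  (forall t, 0 <= t <= 1 -> 0 <= G3 b k a t) -> 0 <= G b k a 1.
Proof.
  intros Ha Hb H3.
  assert (H2 : forall t, 0 <= t <= 1 -> 0 <= G2 b k a t).
  { intros t Ht. rewrite <- (G2_0 b k a Ha).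
    apply (mono _ (G3 b k a)); [lra| |].
    - intros s Hs; apply dG2; lra.
    - intros s Hs; apply H3; lra. }
  assert (H1 : forall t, 0 <= t <= 1 -> 0 <= G1 b k a t).
  { intros t Ht. rewrite <- (G1_0 b k a Ha).
    apply (mono _ (G2 b k a)); [lra| |].
    - intros s Hs; apply dG1; lra.
    - intros s Hs; apply H2; lra. }
  rewrite <- (G_0 b k a Ha Hb).
  apply (mono _ (G1 b k a)); [lra| |].
  - intros s Hs; apply dG; lra.
  - intros s Hs; apply H1; lra.
Qed.

Lemma Gneg b k a : 0 < a -> 1 + b <> 0 ->
  (forall t, 0 <= t <= 1 -> G3 b k a t <= 0) -> G b k a 1 <= 0.
Proof.
  intros Ha Hb H3.
  assert (H2 : forall t, 0 <= t <= 1 -> G2 b k a t <= 0).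
  { intros t Ht. rewrite <- (G2_0 b k a Ha).
    apply (mono' _ (G3 b k a)); [lra| |].
    - intros s Hs; apply dG2; lra.
    - intros s Hs; apply H3; lra. }
  assert (H1 : forall t, 0 <= t <= 1 -> G1 b k a t <= 0).
  { intros t Ht. rewrite <- (G1_0 b k a Ha).
    apply (mono' _ (G2 b k a)); [lra| |].
    - intros s Hs; apply dG1; lra.
    - intros s Hs; apply H2; lra. }
  rewrite <- (G_0 b k a Ha Hb).
  apply (mono' _ (G1 b k a)); [lra| |].
  - intros s Hs; apply dG; lra.
  - intros s Hs; apply H1; lra.
Qed.

Lemma G3_eq b k a t : 0 < a + t -> G3 b k a t =
  (b * Rpower (a+t) b / (a+t)^4) *
  ((6*k-1/2)*((b-1)*(a+t)^2 + t*(b-1)*(b-2)*(a+t)) + k*t^2*(b-1)*(b-2)*(b-3)).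
Proof. intros. unfold G3. field. lra. Qed.

Lemma G3_12 b a t : 0 < b < 1 -> 1 <= a -> 0 <= t <= 1 -> G3 b (1/12) a t <= 0.
Proof.
  intros Hb Ha Ht. rewrite G3_eq by lra.
  assert (0 < b * Rpower (a+t) b / (a+t)^4).
  { unfold Rpower. apply Rdiv_lt_0_compat. apply Rmult_lt_0_compat; [lra|apply exp_pos].
    apply pow_lt; lra. }
  apply Rmult_le_0_l; [lra|].
  assert (0 <= t^2) by nra.
  assert (0 < (1-b)*(2-b)*(3-b)) by (repeat apply Rmult_lt_0_compat; lra).
  nra.
Qed.

Lemma G3_20 b a t : 0 < b < 1 -> 2 <= a -> 0 <= t <= 1 -> 0 <= G3 b (1/20) a t.
Proof.
  intros Hb Ha Ht. rewrite G3_eq by lra.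
  assert (0 < b * Rpower (a+t) b / (a+t)^4).
  { unfold Rpower. apply Rdiv_lt_0_compat. apply Rmult_lt_0_compat; [lra|apply exp_pos].
    apply pow_lt; lra. }
  apply Rmult_le_pos; [lra|].
  set (X := a + t). assert (3*t <= X) by (unfold X; lra). assert (2 <= X) by (unfold X; lra).
  assert (0 <= (1/5)*X^2 - (1/5)*t*(2-b)*X - (1/20)*t^2*(2-b)*(3-b)).
  { assert (0 <= t*X) by (apply Rmult_le_pos; lra).
    assert (0 <= t^2) by (apply pow2_ge_0).
    assert (0 <= t*X*b) by (apply Rmult_le_pos; lra).
    assert (0 <= (2-b)*(3-b) <= 6) by (split; nra).
    assert (t^2*((2-b)*(3-b)) <= t^2 * 6) by (apply Rmult_le_compat_l; lra).
    assert (t^2 <= X^2/9) by nra.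
    nra. }
  clearbody X.
  replace ((6 * (1 / 20) - 1 / 2) * ((b - 1) * X ^ 2 + t * (b - 1) * (b - 2) * X) +
  1 / 20 * t ^ 2 * (b - 1) * (b - 2) * (b - 3)) with
  ((1-b) * (1 / 5 * X ^ 2 - 1 / 5 * t * (2 - b) * X - 1 / 20 * t ^ 2 * (2 - b) * (3 - b))) by field.
  apply Rmult_le_pos; lra.
Qed.

Definition z b N := sum_f_R0 (fun k => Rpower (INR (S k)) b) N
  - Rpower (INR (S N)) b * INR (S N) / (1+b) - Rpower (INR (S N)) b / 2.
Definition Dd b x := b * Rpower x b / x.

Lemma INR_S_pos n : 0 < INR (S n).
Proof. apply lt_0_INR; lia. Qed.

Lemma zp_eq b N : 0 < b -> zeta_partial (- b) N = z b N.
Proof.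
  intros Hb. unfold zeta_partial, z. rewrite Ropp_involutive.
  replace (1 - - b) with (1 + b) by ring.
  rewrite Rpower_plus, Rpower_1 by apply INR_S_pos. f_equal. f_equal. field. lra.
Qed.

Lemma zstep b k N : 0 < b -> z b (S N) - z b N =
  - G b k (INR (S N)) 1 + k * (Dd b (INR (S (S N))) - Dd b (INR (S N))).
Proof.
  intros Hb. unfold z, G, Dd. rewrite tech5. cbv beta.
  rewrite (S_INR (S N)). pose proof (INR_S_pos N).
  field. repeat split; lra.
Qed.

Lemma Dlim b : 0 < b < 1 -> is_lim_seq (fun n => Dd b (INR (S n))) 0.
Proof.
  intros Hb.
  assert (L : is_lim (fun y => b * exp ((b-1) * ln y)) p_infty 0).
  { replace (Finite 0) with (Rbar_mult b 0) by (simpl; f_equal; ring).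
    apply is_lim_scal_l.
    apply (is_lim_comp exp (fun y => (b-1) * ln y) p_infty 0 m_infty).
    - apply is_lim_exp_m.
    - replace m_infty with (Rbar_mult (b-1) p_infty).
      + apply is_lim_scal_l, is_lim_ln_p.
      + simpl. destruct (Rle_dec 0 (b-1)); [exfalso; lra|]. reflexivity.
    - exists 0. intros y Hy. discriminate. }
  apply is_lim_seq_ext with (fun n => b * exp ((b-1) * ln (INR (S n)))).
  - intros n. unfold Dd, Rpower. pose proof (INR_S_pos n).
    replace ((b-1) * ln (INR (S n))) with (b * ln (INR (S n)) + - ln (INR (S n))) by ring.
    rewrite exp_plus, exp_Ropp, exp_ln by auto. field. lra.
  - apply (is_lim_comp_seq (fun y => b * exp ((b-1) * ln y)) (fun n => INR (S n)) p_infty 0 L).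
    + exists 0%nat. intros n _. discriminate.
    + apply (is_lim_seq_incr_1 INR). apply is_lim_seq_INR.
Qed.

Lemma INR_SS_ge n : 2 <= INR (S (S n)).
Proof. rewrite !S_INR. pose proof (pos_INR n). lra. Qed.

Lemma zlim b : 0 < b < 1 ->
  real (Lim_seq (z b)) <= z b 1 - (1/20) * Dd b (INR 2).
Proof.
  intros Hb.
  set (u := fun n => z b (S n) - (1/12) * Dd b (INR (S (S n)))).
  set (v := fun n => z b (S n) - (1/20) * Dd b (INR (S (S n)))).
  assert (Hu : forall n, u n <= u (S n)).
  { intros n. unfold u.
    pose proof (zstep b (1/12) (S n) (proj1 Hb)).
    assert (G b (1/12) (INR (S (S n))) 1 <= 0).
    { pose proof (INR_SS_ge n). apply Gneg; try lra.
      intros t Ht. apply G3_12; lra. }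
    lra. }
  assert (Hv : forall n, v (S n) <= v n).
  { intros n. unfold v.
    pose proof (zstep b (1/20) (S n) (proj1 Hb)).
    assert (0 <= G b (1/20) (INR (S (S n))) 1).
    { pose proof (INR_SS_ge n). apply Gpos; try lra.
      intros t Ht. apply G3_20; lra. }
    lra. }
  assert (HD : is_lim_seq (fun n => Dd b (INR (S (S n)))) 0).
  { apply (is_lim_seq_incr_1 (fun n => Dd b (INR (S n)))). apply Dlim; auto. }
  assert (Hvu : is_lim_seq (fun n => v n - u n) 0).
  { apply is_lim_seq_ext with (fun n => (1/12 - 1/20) * Dd b (INR (S (S n)))).
    - intros n. unfold u, v. ring.
    - replace (Finite 0) with (Rbar_mult (1/12 - 1/20) 0) by (simpl; f_equal; ring).
      apply is_lim_seq_scal_l. auto. }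
  destruct (ex_lim_seq_adj u v Hu Hv Hvu) as [_ [[l Hl] _]].
  assert (Hz : is_lim_seq (z b) l).
  { apply is_lim_seq_incr_1.
    apply is_lim_seq_ext with (fun n => v n + (1/20) * Dd b (INR (S (S n)))).
    - intros n. unfold v. ring.
    - replace (Finite l) with (Finite (l + (1/20)*0)) by (f_equal; ring).
      apply is_lim_seq_plus'; auto. apply (is_lim_seq_scal_l _ (1/20) 0). auto. }
  rewrite (is_lim_seq_unique _ _ Hz). simpl.
  assert (Hle : forall n, v n <= v 0%nat).
  { induction n; [lra|]. specialize (Hv n). lra. }
  change (z b 1 - 1/20 * Dd b (INR 2)) with (v 0%nat).
  apply (is_lim_seq_le v (fun _ => v 0%nat) l (v 0%nat)); auto.
  apply is_lim_seq_const.
Qed.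

Lemma expP x : 0 <= x -> 1 + x + x^2/2 + x^3/6 <= exp x.
Proof.
  intros Hx.
  assert (H1 : forall s, 0 <= s -> 1 + s <= exp s).
  { intros s Hs. destruct (Req_dec s 0) as [->|]. rewrite exp_0; lra.
    left. apply exp_ineq1. lra. }
  assert (H2 : forall s, 0 <= s -> 0 <= exp s - 1 - s - s^2/2).
  { intros s Hs. replace 0 with (exp 0 - 1 - 0 - 0^2/2) at 1 by (rewrite exp_0; field).
    apply (mono (fun s => exp s - 1 - s - s^2/2) (fun s => exp s - 1 - s) 0 s); auto.
    - intros t Ht. auto_derive; auto. field.
    - intros t Ht. specialize (H1 t). lra. }
  assert (0 <= exp x - 1 - x - x^2/2 - x^3/6); [|lra].
  replace 0 with (exp 0 - 1 - 0 - 0^2/2 - 0^3/6) at 1 by (rewrite exp_0; field).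
  apply (mono (fun s => exp s - 1 - s - s^2/2 - s^3/6) (fun s => exp s - 1 - s - s^2/2) 0 x); auto.
  - intros t Ht. auto_derive; auto. field.
  - intros t Ht. apply H2; lra.
Qed.

Lemma ln15 : 2/5 <= ln (3/2).
Proof.
  assert (0 <= ln (3/2) - 2*(3/2-1)/(3/2+1)); [|lra].
  replace 0 with (ln 1 - 2*(1-1)/(1+1)) at 1 by (rewrite ln_1; field).
  apply (mono (fun y => ln y - 2*(y-1)/(y+1)) (fun y => 1/y - 4/(y+1)^2) 1 (3/2)); [lra| |].
  - intros t Ht. auto_derive. lra. field. lra.
  - intros t Ht.
    assert (1/t - 4/(t+1)^2 = (t-1)^2/(t*(t+1)^2)) by (field; lra).
    rewrite H. apply Rdiv_le_0_compat. nra. apply Rmult_lt_0_compat; nra.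
Qed.

Lemma poly_ineq b : 0 < b < 1 ->
  let x := 2/5*b in
  0 < (1 + x + x^2/2 + x^3/6) - 5/2 + 2/(1+b) + b/40.
Proof.
  intros Hb x. unfold x.
  assert (E : (1 + 2/5*b + (2/5*b)^2/2 + (2/5*b)^3/6) - 5/2 + 2/(1+b) + b/40
     = ((1 + 2/5*b + (2/5*b)^2/2 + (2/5*b)^3/6 - 5/2 + b/40)*(1+b) + 2)/(1+b))
    by (field; lra).
  rewrite E. apply Rdiv_lt_0_compat; [|lra].
  assert (0 <= (b - 17/20)^2) by apply pow2_ge_0.
  assert (0 <= b*(b - 17/20)^2) by (apply Rmult_le_pos; lra).
  assert (0 <= b^2*(b - 17/20)^2) by (apply Rmult_le_pos; nra).
  assert (0 <= b^2) by nra.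
  assert (0 <= b^3) by (apply pow_le; lra).
  assert (0 <= b^4) by (apply pow_le; lra).
  nra.
Qed.

Lemma Rpower1 b : Rpower 1 b = 1.
Proof. unfold Rpower. rewrite ln_1, Rmult_0_r, exp_0. reflexivity. Qed.

Lemma z1 b : 0 < b -> z b 1 = 1 + Rpower 2 b - Rpower 2 b * 2/(1+b) - Rpower 2 b/2.
Proof.
  intros Hb. unfold z. simpl. replace (1+1) with 2 by ring. rewrite Rpower1. ring.
Qed.

Theorem lemma10 (alpha : R) (h0 : 0 < alpha) (h1 : alpha < 1) :
  1 - 2 * Rpower 2 (1 - alpha) + Rpower 3 (1 - alpha) - zeta (alpha - 1) > 0.
Proof.
  set (b := 1 - alpha). assert (Hb : 0 < b < 1) by (unfold b; lra).
  unfold zeta. replace (alpha - 1) with (- b) by (unfold b; ring).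
  rewrite (Lim_seq_ext _ (z b)) by (intros; apply zp_eq; lra).
  pose proof (zlim b Hb) as HL. rewrite z1 in HL by lra.
  replace (INR 2) with 2 in HL by (simpl; ring). unfold Dd in HL.
  set (y := Rpower 2 b) in *.
  assert (Hy : 0 < y) by (unfold y, Rpower; apply exp_pos).
  assert (Hw : Rpower 3 b = y * Rpower (3/2) b).
  { unfold y. rewrite Rpower_mult_distr by lra. f_equal. field. }
  assert (HP : let x := 2/5*b in 1 + x + x^2/2 + x^3/6 <= Rpower (3/2) b).
  { intros x. unfold Rpower. eapply Rle_trans; [|apply expP].
    - pose proof ln15. unfold x.
      assert (2/5*b <= b * ln (3/2)) by nra.
      assert (0 <= 2/5*b) by lra.
      assert (0 <= b*ln(3/2) - 2/5*b) by lra.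
      set (u := 2/5*b) in *. set (v := b * ln (3/2)) in *.
      assert (u^2 <= v^2) by nra. assert (u^3 <= v^3) by (simpl; nra).
      lra.
    - pose proof ln15. nra. }
  pose proof (poly_ineq b Hb) as Hpoly. simpl in HP, Hpoly.
  rewrite Hw.
  set (r := Rpower (3/2) b) in *.
  set (K := 2/(1+b)) in *.
  assert (HK : y * 2 / (1 + b) = y * K) by (unfold K; field; lra).
  rewrite HK in HL.
  set (P := 1 + 2 / 5 * b + 2 / 5 * b * (2 / 5 * b * 1) / 2 +
    2 / 5 * b * (2 / 5 * b * (2 / 5 * b * 1)) / 6) in *.
  assert (0 < y * (P - 5/2 + K + b/40)) by (apply Rmult_lt_0_compat; lra).
  assert (y * P <= y * r) by (apply Rmult_le_compat_l; lra).
  set (L := real (Lim_seq (z b))) in *.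
  lra.
Qed.
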